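(* In a finite dynamic game as described in the context, if $K^i$ is unilaterally sufficient information for player $i$, then for every Bayes–Nash equilibrium behavioral strategy profile $g=(g^j)_{j\in\mathcal{I}}$ there exists a $K^i$-based strategy $\rho^i$ such that $(\rho^i,g^{-i})$ is a Bayes–Nash equilibrium and $J^j(\rho^i,g^{-i})=J^j(g)$ for all $j\in\mathcal{I}$.
   Context: Game model: finite set of players $\mathcal{I}$, times $\mathcal{T}=\{1,\dots,T\}$. At time $t$ each player $i$ takes action $U_t^i\in\mathcal{U}_t^i$, obtains reward $R_t^i\in[-1,1]$ and learns new information $Z_t^i\in\mathcal{Z}_t^i$. There is a state $X_t\in\mathcal{X}_t$ with $(X_{t+1},Z_t,R_t)=f_t(X_t,U_t,W_t)$ for fixed functions $f_t$. Primitive random variables $(X_1,H_1)$ and $W_1,\dots,W_T$ are mutually independent with commonly known distributions. All sets are finite. Perfect recall: $H_t^i=(H_1^i,Z_{1:t-1}^i)\in\mathcal{H}_t^i$, and $U_t^i$ is a component of $Z_t^i$. Behavioral strategy $g_t^i:\mathcal{H}_t^i\to\Delta(\mathcal{U}_t^i)$; payoff $J^j(g)=\mathbb{E}^g[\sum_t R_t^j]$. A profile $g$ is a Bayes–Nash equilibrium if $J^j(g)\ge J^j(\tilde g^j,g^{-j})$ for all $j$ and all behavioral $\tilde g^j$. A realization is admissible under $g$ if it has positive probability under $g$. Compression: $K_1^i=\iota_1^i(H_1^i)$, $K_t^i=\iota_t^i(K_{t-1}^i,Z_{t-1}^i)$ for fixed maps, finite value sets $\mathcal{K}_t^i$; $k_t^i$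 is the compression of $h_t^i$; a $K^i$-based strategy has $\rho_t^i:\mathcal{K}_t^i\to\Delta(\mathcal{U}_t^i)$. Unilaterally sufficient information (USI): $K^i$ is USI for player $i$ if there exist $F_t^{i,g^i}:\mathcal{K}_t^i\to\Delta(\mathcal{H}_t^i)$ depending only on $g^i$ and $\Phi_t^{i,g^{-i}}:\mathcal{K}_t^i\to\Delta(\mathcal{X}_t\times\mathcal{H}_t^{-i})$ depending only on $g^{-i}$ with $\Pr^g(x_t,h_t\mid k_t^i)=F_t^{i,g^i}(h_t^i\mid k_t^i)\Phi_t^{i,g^{-i}}(x_t,h_t^{-i}\mid k_t^i)$ for all behavioral profiles $g$, all $t$, all $k_t^i$ admissible under $g$ (with $x_t,h_t^i,h_t^{-i}$ ranging independently; the left side is $0$ if they disagree on shared components). *)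

(* Defs.v *)
From HB Require Import structures.
From mathcomp Require Import all_boot all_order all_algebra.
From mathcomp Require Import reals.

Set Implicit Arguments.
Unset Strict Implicit.
Unset Printing Implicit Defensive.

Import Order.TTheory GRing.Theory Num.Theory.
Local Open Scope ring_scope.

(* Times are 0-indexed: the paper's time t corresponds to t-1 here, so the
   horizon T = {1,...,T} becomes {0,...,T-1}.  Families indexed by nat are
   only relevant for t < horizon (resp. t <= horizon for states). *)

Definition is_dist (R : realType) (A : finType) (p : A -> R) : Prop :=
  (forall a, 0 <= p a) /\ \sum_(a : A) p a = 1.

Record game (R : realType) := Game {
  player : finType;
  horizon : nat;
  stateT : nat -> finType;
  actT : player -> nat -> finType;
  infoT : player -> nat -> finType;
  noiseT : nat -> finType;
  init_infoT : player -> finType;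
  init_dist : (stateT 0 * {dffun forall i : player, init_infoT i})%type -> R;
  noise_dist : forall t, noiseT t -> R;
  (* (X_{t+1}, Z_t, R_t) = f_t(X_t, U_t, W_t) *)
  dyn : forall t, stateT t -> {dffun forall i : player, actT i t} -> noiseT t ->
        (stateT t.+1 * {dffun forall i : player, infoT i t} * (player -> R))%type;
  (* U_t^i is a component of Z_t^i: the projection extracting it *)
  act_of_info : forall i t, infoT i t -> actT i t
}.

Section GameDefs.
Context {R : realType} (G : game R).

Definition game_wf : Prop :=
  is_dist (@init_dist R G)
  /\ (forall t, (t < horizon G)%N -> is_dist (@noise_dist R G t))
  /\ (forall t, (t < horizon G)%N -> forall (x : stateT G t) u w (j : player G),
        -1 <= (dyn x u w).2 j <= 1)
  /\ (forall t, (t < horizon G)%N -> forall (x : stateT G t) u w (j : player G),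
        act_of_info ((dyn x u w).1.2 j) = u j).

Fixpoint hist (i : player G) (t : nat) : finType :=
  match t with
  | 0 => init_infoT i
  | t'.+1 => (hist i t' * infoT i t')%type
  end.

Definition jhist (t : nat) := {dffun forall i : player G, hist i t}.

Definition ohist (i : player G) (t : nat) :=
  {dffun forall j : {j : player G | j != i}, hist (val j) t}.

Definition others (i : player G) (t : nat) (h : jhist t) : ohist i t :=
  [ffun j => h (val j)].

Definition hext (t : nat) (h : jhist t) (z : {dffun forall i : player G, infoT i t})
  : jhist t.+1 := [ffun i => ((h i, z i) : hist i t.+1)].

Definition strat (i : player G) := forall t, hist i t -> actT i t -> R.
Definition profile := forall i : player G, strat i.

Definition valid_strat (i : player G) (s : strat i) : Prop :=
  forall t, (t < horizon G)%N -> forall h, is_dist (s t h).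
Definition valid_profile (g : profile) : Prop := forall i, valid_strat (g i).

Definition act_prob (g : profile) t (h : jhist t)
  (u : {dffun forall i : player G, actT i t}) : R :=
  \prod_(i : player G) g i t (h i) (u i).

Fixpoint pr (g : profile) (t : nat) : stateT G t -> jhist t -> R :=
  match t return stateT G t -> jhist t -> R with
  | 0 => fun x h => init_dist (x, h)
  | t'.+1 => fun x' h' =>
      \sum_(x : stateT G t') \sum_(h : jhist t') pr g x h *
        \sum_(u : {dffun forall i : player G, actT i t'}) act_prob g h u *
          \sum_(w : noiseT G t') noise_dist w *
            (((dyn x u w).1.1 == x') && (hext h (dyn x u w).1.2 == h'))%:R
  end.

Definition exp_reward (g : profile) (t : nat) (j : player G) : R :=
  \sum_(x : stateT G t) \sum_(h : jhist t) pr g x h *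
    \sum_(u : {dffun forall i : player G, actT i t}) act_prob g h u *
      \sum_(w : noiseT G t) noise_dist w * (dyn x u w).2 j.

Definition payoff (g : profile) (j : player G) : R :=
  \sum_(t < horizon G) exp_reward g t j.

Definition BNE (g : profile) : Prop :=
  valid_profile g /\
  forall j (s : strat j), valid_strat s -> payoff (dfwith g s) j <= payoff g j.

Record compression (i : player G) := Compression {
  compT : nat -> finType;
  comp0 : init_infoT i -> compT 0;
  compS : forall t, compT t -> infoT i t -> compT t.+1
}.

Fixpoint kappa (i : player G) (C : compression i) (t : nat) : hist i t -> compT C t :=
  match t return hist i t -> compT C t with
  | 0 => fun h => @comp0 i C h
  | t'.+1 => fun hz => @compS i C t' (kappa C hz.1) hz.2
  end.

Definition pr_k (i : player G) (C : compression i) (g : profile) t (k : compT C t) : R :=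
  \sum_(x : stateT G t) \sum_(h : jhist t) pr g x h * (kappa C (h i) == k)%:R.

Definition pr_cond (i : player G) (C : compression i) (g : profile) t (k : compT C t)
  (x : stateT G t) (h : jhist t) : R :=
  pr g x h * (kappa C (h i) == k)%:R / pr_k g k.

Definition USI (i : player G) (C : compression i) : Prop :=
  exists (F : strat i -> forall t, compT C t -> hist i t -> R)
         (Phi : profile -> forall t, compT C t -> (stateT G t * ohist i t)%type -> R),
    (forall g g' : profile,
        (forall j, j != i -> forall t h u, g j t h u = g' j t h u) ->
        forall t k xo, Phi g t k xo = Phi g' t k xo)
    /\ (forall s : strat i, valid_strat s ->
          forall t, (t < horizon G)%N -> forall k, is_dist (F s t k))
    /\ (forall g : profile, valid_profile g ->
          forall t, (t < horizon G)%N -> forall k, is_dist (Phi g t k))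
    /\ (forall g : profile, valid_profile g ->
          forall t, (t < horizon G)%N -> forall k, 0 < pr_k g k ->
          forall x (h : jhist t),
            pr_cond g k x h = F (g i) t k (h i) * Phi g t k (x, others i h)).

Definition kstrat (i : player G) (C : compression i) :=
  forall t, compT C t -> actT i t -> R.

Definition valid_kstrat (i : player G) (C : compression i) (rho : kstrat C) : Prop :=
  forall t, (t < horizon G)%N -> forall k, is_dist (rho t k).

Definition kbased (i : player G) (C : compression i) (rho : kstrat C) : strat i :=
  fun t h => rho t (kappa C h).

End GameDefs.

(* Main.v *)
Require Import Defs.

From HB Require Import structures.
From mathcomp Require Import all_boot all_order all_algebra.
From mathcomp Require Import reals.
From Stdlib Require Import FunctionalExtensionality.
From mathcomp Require Import ring.
Import Order.TTheory GRing.Theory Num.Theory.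
Local Open Scope ring_scope.
Set Implicit Arguments.
Unset Strict Implicit.


Lemma neq_sym_i (R : realType) (G : game R) (i : player G) (j : player G) : i <> j -> j != i.
Proof. by move=> ne; apply/eqP => e; apply: ne. Qed.

Definition join (R : realType) (G : game R) (i : player G) t (hi : hist i t) (o : ohist i t) : jhist G t :=
  [ffun j => match i =P j with
             | ReflectT e => ecast j (hist j t) e hi
             | ReflectF ne => o (exist _ j (neq_sym_i ne)) end].

Lemma join_i (R : realType) (G : game R) (i : player G) t hi o : join (t:=t) hi o i = hi.
Proof. by rewrite /join ffunE; case: eqP => // e; rewrite eq_axiomK. Qed.

Lemma join_o (R : realType) (G : game R) (i : player G) t hi o : others i (join (t:=t) hi o) = o.
Proof.
apply/ffunP => -[j pj]; rewrite !ffunE /=; case: eqP => [e|ne].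
  by exfalso; move: pj; rewrite -e eqxx.
by congr (o (exist _ j _)); apply: bool_irrelevance.
Qed.

Lemma join_K (R : realType) (G : game R) (i : player G) t (h : jhist G t) : join (h i) (others i h) = h.
Proof.
apply/ffunP => j; rewrite !ffunE; case: eqP => [e|ne] /=.
  by subst j.
by rewrite ffunE.
Qed.

Lemma sum_split (R : realType) (G : game R) (i : player G) t (A : hist i t -> R) (B : ohist i t -> R) :
  \sum_(h : jhist G t) A (h i) * B (others i h) =
  (\sum_hi A hi) * (\sum_o B o).
Proof.
rewrite big_distrlr /= pair_bigA /=.
rewrite (reindex (fun p : hist i t * ohist i t => join p.1 p.2)) /=.
  by apply: eq_bigr => -[hi o] _ /=; rewrite join_i join_o.
exists (fun h : jhist G t => (h i, others i h)) => [[hi o] _|h _] /=.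
  by rewrite join_i join_o.
by rewrite join_K.
Qed.

Definition pi_ (R : realType) (G : game R) (i : player G) (g : profile G) t (o : ohist i t) (u : {dffun forall j : player G, actT j t}) : R :=
  \prod_(s : {j : player G | j != i}) g (val s) t (o s) (u (val s)).

Arguments pi_ {R G} i g {t} o u.

Lemma act_prob_split (R : realType) (G : game R) (i : player G) (g : profile G) t (h : jhist G t) u :
  act_prob g h u = g i t (h i) (u i) * pi_ i g (others i h) u.
Proof.
rewrite /act_prob (bigD1 i) //=; congr (_ * _).
rewrite /pi_ (reindex_omap (val : {j : player G | j != i} -> _) insub).
  apply: eq_big => [[j pj]|[j pj] _] /=; last by rewrite ffunE.
  rewrite pj (insubT (fun x => x != i) pj) /=. apply/eqP. by congr Some.
by move=> j ji; rewrite insubT.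
Qed.

Lemma pi_with (R : realType) (G : game R) (i : player G) (g : profile G) (s : strat i) t o u : pi_ i (dfwith g s) (t:=t) o u = pi_ i g o u.
Proof.
by apply: eq_bigr => -[j pj] _ /=; rewrite dfwith_out // eq_sym.
Qed.


Lemma pr_ge0 (R : realType) (G : game R) (g : profile G) :
  game_wf G -> valid_profile g ->
  forall t, (t <= horizon G)%N -> forall x h, 0 <= pr g (t:=t) x h.
Proof.
move=> [[d0 _] [dn _]] vg; elim=> [|t IH] Ht x h /=; first exact: d0.
apply: sumr_ge0 => x0 _; apply: sumr_ge0 => h0 _.
apply: mulr_ge0; first by apply: IH; apply: ltnW.
apply: sumr_ge0 => u _; apply: mulr_ge0.
  by apply: prodr_ge0 => j _; case: (vg j t Ht (h0 j)) => ->.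
apply: sumr_ge0 => w _; apply: mulr_ge0; first by case: (dn t Ht) => ->.
by rewrite ler0n.
Qed.

Lemma collapse_pair (R : realType) (A B : finType) (a : A) (b : B) (F : A * B -> R) :
  \sum_(p : A * B) ((a == p.1) && (b == p.2))%:R * F p = F (a, b).
Proof.
rewrite (bigD1 (a, b)) //= !eqxx mul1r big1 ?addr0 // => -[x y] /= ne.
suff -> : ((a == x) && (b == y)) = false by rewrite mul0r.
by apply/negbTE; apply: contra ne => /andP[/eqP <- /eqP <-].
Qed.

Lemma pr_step (R : realType) (G : game R) (g : profile G) t
  (Phi : stateT G t.+1 -> jhist G t.+1 -> R) :
  \sum_(x' : stateT G t.+1) \sum_(h' : jhist G t.+1) pr g x' h' * Phi x' h' =
  \sum_(x : stateT G t) \sum_(h : jhist G t) pr g x h *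
    (\sum_(u : {dffun forall i : player G, actT i t}) act_prob g h u *
      \sum_(w : noiseT G t) noise_dist w * Phi (dyn x u w).1.1 (hext h (dyn x u w).1.2)).
Proof.
rewrite pair_bigA /= pair_bigA /=.
under eq_bigr => p' _ do rewrite pair_bigA /= mulr_suml.
rewrite exchange_big /=; apply: eq_bigr => p _.
under eq_bigr => p' _ do rewrite -mulrA.
rewrite -mulr_sumr; congr (_ * _).
under [LHS]eq_bigr => p' _ do rewrite mulr_suml.
rewrite exchange_big /=; apply: eq_bigr => u _.
under [LHS]eq_bigr => p' _ do rewrite -mulrA.
rewrite -mulr_sumr; congr (_ * _).
under [LHS]eq_bigr => p' _ do rewrite mulr_suml.
rewrite exchange_big /=; apply: eq_bigr => w _.
under [LHS]eq_bigr => p' _ do rewrite -mulrA.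
rewrite -mulr_sumr; congr (_ * _).
exact: (@collapse_pair R (stateT G t.+1) (jhist G t.+1) _ _ (fun p => Phi p.1 p.2)).
Qed.

Definition mkrho (R : realType) (G : game R) (i : player G) (C : compression i)
  (F : strat i -> forall t, compT C t -> hist i t -> R) (s : strat i) : kstrat C :=
  fun t k a => \sum_(hi : hist i t) F s t k hi * s t hi a.
Arguments mkrho {R G i C} F s t k a.

Lemma split_k (R : realType) (G : game R) (i : player G) (C : compression i) t
  (f : stateT G t -> jhist G t -> compT C t -> R) :
  \sum_(x : stateT G t) \sum_(h : jhist G t) f x h (kappa C (h i)) =
  \sum_(k : compT C t) \sum_(x : stateT G t) \sum_(h : jhist G t)
     (kappa C (h i) == k)%:R * f x h k.
Proof.
rewrite [RHS]exchange_big /=; apply: eq_bigr => x _.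
rewrite [RHS]exchange_big /=; apply: eq_bigr => h _.
rewrite (bigD1 (kappa C (h i))) //= eqxx mul1r big1 ?addr0 // => k /negbTE.
by rewrite eq_sym => ->; rewrite mul0r.
Qed.

Lemma star (R : realType) (G : game R) (i : player G) (C : compression i)
  (F : strat i -> forall t, compT C t -> hist i t -> R)
  (Phi : profile G -> forall t, compT C t -> (stateT G t * ohist i t)%type -> R)
  (g : profile G) t :
  game_wf G -> valid_profile g -> (t < horizon G)%N ->
  (forall k, is_dist (F (g i) t k)) ->
  (forall k, 0 < pr_k g k -> forall x (h : jhist G t),
      pr_cond g k x h = F (g i) t k (h i) * Phi g t k (x, others i h)) ->
  forall a (Psi : stateT G t -> ohist i t -> compT C t -> R),
  \sum_(x : stateT G t) \sum_(h : jhist G t)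
     pr g x h * (g i t (h i) a * Psi x (others i h) (kappa C (h i))) =
  \sum_(x : stateT G t) \sum_(h : jhist G t)
     pr g x h * (mkrho F (g i) t (kappa C (h i)) a * Psi x (others i h) (kappa C (h i))).
Proof.
move=> wf vg Ht HF Hd a Psi.
rewrite (split_k (fun x h k => pr g x h * (g i t (h i) a * Psi x (others i h) k))).
rewrite (split_k (fun x h k => pr g x h * (mkrho F (g i) t k a * Psi x (others i h) k))).
apply: eq_bigr => k _.
have prge0 := pr_ge0 wf vg (ltnW Ht).
have pk0 : 0 <= pr_k g k.
  apply: sumr_ge0 => x _; apply: sumr_ge0 => h _.
  by apply: mulr_ge0; [apply: prge0 | rewrite ler0n].
rewrite le_eqVlt in pk0; case/orP: pk0 => [/eqP z | pos].
  have H0 : forall x h, pr g x h * (kappa C (h i) == k)%:R = 0.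
    move=> x h.
    have gep : forall x' (h' : jhist G t), 0 <= pr g x' h' * (kappa C (h' i) == k)%:R.
      by move=> x' h'; apply: mulr_ge0; [apply: prge0 | rewrite ler0n].
    have Hx : \sum_(h' : jhist G t) pr g x h' * (kappa C (h' i) == k)%:R = 0.
      move: z; rewrite /pr_k => /esym z.
      apply: (psumr_eq0P _ z) => // x' _; exact: sumr_ge0.
    by apply: (psumr_eq0P _ Hx).
  rewrite big1 => [|x _]; last first.
    rewrite big1 // => h _.
    by rewrite mulrA [_%:R * _]mulrC H0 mul0r.
  rewrite big1 // => x _; rewrite big1 // => h _.
  by rewrite mulrA [_%:R * _]mulrC H0 mul0r.
have E : forall x h, pr g x h * (kappa C (h i) == k)%:R =
    pr_k g k * (F (g i) t k (h i) * Phi g t k (x, others i h)).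
  move=> x h; rewrite -(Hd k pos x h) /pr_cond [RHS]mulrC divfK //.
  by rewrite gt_eqF.
apply: eq_bigr => x _.
transitivity (pr_k g k * \sum_(h : jhist G t)
   ((F (g i) t k (h i) * g i t (h i) a) *
    (Phi g t k (x, others i h) * Psi x (others i h) k))).
  rewrite mulr_sumr; apply: eq_bigr => h _.
  transitivity ((pr g x h * (kappa C (h i) == k)%:R) * (g i t (h i) a * Psi x (others i h) k)).
    by ring.
  by rewrite E; ring.
transitivity (pr_k g k * \sum_(h : jhist G t)
   (F (g i) t k (h i) *
    (mkrho F (g i) t k a * (Phi g t k (x, others i h) * Psi x (others i h) k)))); last first.
  rewrite mulr_sumr; apply: eq_bigr => h _.
  transitivity ((pr g x h * (kappa C (h i) == k)%:R) * (mkrho F (g i) t k a * Psi x (others i h) k)).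
    by rewrite E; ring.
  by ring.
rewrite (sum_split (fun hi => F (g i) t k hi * g i t hi a)
                   (fun o => Phi g t k (x, o) * Psi x o k)).
rewrite (sum_split (fun hi => F (g i) t k hi)
                   (fun o => mkrho F (g i) t k a * (Phi g t k (x, o) * Psi x o k))).
case: (HF k) => _ ->; rewrite mul1r -mulr_sumr.
by [].
Qed.

Definition Lprop (R : realType) (G : game R) (i : player G) (C : compression i)
  (g g' : profile G) t :=
  forall phi : stateT G t -> ohist i t -> compT C t -> R,
  \sum_(x : stateT G t) \sum_(h : jhist G t) pr g' x h * phi x (others i h) (kappa C (h i)) =
  \sum_(x : stateT G t) \sum_(h : jhist G t) pr g x h * phi x (others i h) (kappa C (h i)).

Lemma push_u (R : realType) (G : game R) (g : profile G) t
  (c : stateT G t -> jhist G t -> {dffun forall j : player G, actT j t} -> R) :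
  \sum_(x : stateT G t) \sum_(h : jhist G t) pr g x h * (\sum_u c x h u) =
  \sum_u \sum_(x : stateT G t) \sum_(h : jhist G t) pr g x h * c x h u.
Proof.
rewrite [RHS]exchange_big /=; apply: eq_bigr => x _.
rewrite [RHS]exchange_big /=; apply: eq_bigr => h _.
by rewrite mulr_sumr.
Qed.

Lemma Mstep (R : realType) (G : game R) (i : player G) (C : compression i)
  (F : strat i -> forall t, compT C t -> hist i t -> R)
  (Phi : profile G -> forall t, compT C t -> (stateT G t * ohist i t)%type -> R)
  (g : profile G) t :
  game_wf G -> valid_profile g -> (t < horizon G)%N ->
  (forall k, is_dist (F (g i) t k)) ->
  (forall k, 0 < pr_k g k -> forall x (h : jhist G t),
      pr_cond g k x h = F (g i) t k (h i) * Phi g t k (x, others i h)) ->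
  Lprop C g (dfwith g (kbased (mkrho F (g i)))) t ->
  forall psi : stateT G t -> ohist i t -> compT C t -> {dffun forall j : player G, actT j t} -> R,
  \sum_(x : stateT G t) \sum_(h : jhist G t) pr (dfwith g (kbased (mkrho F (g i)))) x h *
     (\sum_u act_prob (dfwith g (kbased (mkrho F (g i)))) h u * psi x (others i h) (kappa C (h i)) u) =
  \sum_(x : stateT G t) \sum_(h : jhist G t) pr g x h *
     (\sum_u act_prob g h u * psi x (others i h) (kappa C (h i)) u).
Proof.
move=> wf vg Ht HF Hd HL psi.
set g' := dfwith g _.
transitivity (\sum_(x : stateT G t) \sum_(h : jhist G t) pr g' x h *
   (fun x o k => \sum_(u : {dffun forall j : player G, actT j t}) mkrho F (g i) t k (u i) * (pi_ i g o u * psi x o k u))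
     x (others i h) (kappa C (h i))).
  apply: eq_bigr => x _; apply: eq_bigr => h _; congr (_ * _).
  apply: eq_bigr => u _; rewrite (act_prob_split i) pi_with /g' dfwith_in /kbased.
  by rewrite mulrA.
rewrite /g' (HL (fun x o k => \sum_(u : {dffun forall j : player G, actT j t}) mkrho F (g i) t k (u i) * (pi_ i g o u * psi x o k u))) push_u.
under [RHS]eq_bigr => x _ do under eq_bigr => h _ do under eq_bigr => u _ do
  rewrite (act_prob_split i) -mulrA.
rewrite [RHS]push_u; apply: eq_bigr => u _.
symmetry.
exact: (star wf vg Ht HF Hd (u i) (fun x o k => pi_ i g o u * psi x o k u)).
Qed.

Definition ohext (R : realType) (G : game R) (i : player G) t (o : ohist i t)
  (z : {dffun forall j : player G, infoT j t}) : ohist i t.+1 :=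
  [ffun s => ((o s, z (val s)) : hist (val s) t.+1)].

Lemma hext_others (R : realType) (G : game R) (i : player G) t (h : jhist G t) z :
  others i (hext h z) = ohext (others i h) z.
Proof. by apply/ffunP => s; rewrite !ffunE. Qed.

Lemma kappa_hext (R : realType) (G : game R) (i : player G) (C : compression i) t
  (h : jhist G t) z :
  kappa C ((hext h z) i) = compS (kappa C (h i)) (z i).
Proof. by rewrite ffunE. Qed.

Lemma Lall (R : realType) (G : game R) (i : player G) (C : compression i)
  (F : strat i -> forall t, compT C t -> hist i t -> R)
  (Phi : profile G -> forall t, compT C t -> (stateT G t * ohist i t)%type -> R)
  (g : profile G) :
  game_wf G -> valid_profile g ->
  (forall t, (t < horizon G)%N -> forall k, is_dist (F (g i) t k)) ->
  (forall t, (t < horizon G)%N -> forall k, 0 < pr_k g k -> forall x (h : jhist G t),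
      pr_cond g k x h = F (g i) t k (h i) * Phi g t k (x, others i h)) ->
  forall t, (t <= horizon G)%N -> Lprop C g (dfwith g (kbased (mkrho F (g i)))) t.
Proof.
move=> wf vg HF Hd; elim=> [|t IH] Ht phi; first by [].
set g' := dfwith g _.
have key : forall g0 : profile G,
  \sum_(x' : stateT G t.+1) \sum_(h' : jhist G t.+1) pr g0 x' h' *
     phi x' (others i h') (kappa C (h' i)) =
  \sum_(x : stateT G t) \sum_(h : jhist G t) pr g0 x h *
    (\sum_(u : {dffun forall j : player G, actT j t}) act_prob g0 h u *
      (fun x o k u => \sum_(w : noiseT G t) noise_dist w *
          phi (dyn x u w).1.1 (ohext o (dyn x u w).1.2) (compS k ((dyn x u w).1.2 i)))
      x (others i h) (kappa C (h i)) u).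
  move=> g0.
  rewrite (pr_step g0 (fun x' h' => phi x' (others i h') (kappa C (h' i)))).
  apply: eq_bigr => x _; apply: eq_bigr => h _; congr (_ * _).
  apply: eq_bigr => u _; congr (_ * _); apply: eq_bigr => w _.
  by rewrite hext_others kappa_hext.
rewrite !key.
exact: (Mstep wf vg Ht (HF t Ht) (Hd t Ht) (IH (ltnW Ht))
  (fun x o k u => \sum_(w : noiseT G t) noise_dist w *
          phi (dyn x u w).1.1 (ohext o (dyn x u w).1.2) (compS k ((dyn x u w).1.2 i)))).
Qed.

Lemma payoff_eq (R : realType) (G : game R) (i : player G) (C : compression i)
  (F : strat i -> forall t, compT C t -> hist i t -> R)
  (Phi : profile G -> forall t, compT C t -> (stateT G t * ohist i t)%type -> R)
  (g : profile G) :
  game_wf G -> valid_profile g ->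
  (forall t, (t < horizon G)%N -> forall k, is_dist (F (g i) t k)) ->
  (forall t, (t < horizon G)%N -> forall k, 0 < pr_k g k -> forall x (h : jhist G t),
      pr_cond g k x h = F (g i) t k (h i) * Phi g t k (x, others i h)) ->
  forall j, payoff (dfwith g (kbased (mkrho F (g i)))) j = payoff g j.
Proof.
move=> wf vg HF Hd j; apply: eq_bigr => t _.
have Ht : (t < horizon G)%N := ltn_ord t.
exact: (Mstep wf vg Ht (HF t Ht) (Hd t Ht) (Lall wf vg HF Hd (ltnW Ht))
          (fun x o k u => \sum_(w : noiseT G t) noise_dist w * (dyn x u w).2 j)).
Qed.

Lemma dfwith_twice (R : realType) (G : game R) (g : profile G) (i : player G) (x s : strat i) :
  dfwith (dfwith g x) s = dfwith g s.
Proof.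
apply: functional_extensionality_dep => l.
by case: (eqVneq i l) => [<-|ne]; rewrite ?dfwith_in // !dfwith_out.
Qed.

Lemma dfwith_comm (R : realType) (G : game R) (g : profile G) (i j : player G)
  (x : strat i) (s : strat j) : i != j ->
  dfwith (dfwith g x) s = dfwith (dfwith g s) x.
Proof.
move=> ij; apply: functional_extensionality_dep => l.
case: (eqVneq j l) => [<-|nj].
  by rewrite dfwith_in dfwith_out // dfwith_in.
case: (eqVneq i l) => [<-|ni].
  by rewrite [RHS]dfwith_in [LHS]dfwith_out ?dfwith_in // eq_sym.
by rewrite !dfwith_out.
Qed.

Theorem lemma6 (R : realType) (G : game R) (i : player G) (C : compression i) :
  game_wf G -> USI C ->
  forall g : profile G, BNE g ->
  exists rho : kstrat C,
    valid_kstrat rho /\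
    BNE (dfwith g (kbased rho)) /\
    (forall j : player G, payoff (dfwith g (kbased rho)) j = payoff g j).
Proof.
move=> wf [F [Phi [_ [HF [_ Hd]]]]] g [vg Hbne].
have PE : forall g0 : profile G, valid_profile g0 ->
    forall j, payoff (dfwith g0 (kbased (mkrho F (g0 i)))) j = payoff g0 j.
  move=> g0 vg0; apply: (payoff_eq (Phi := Phi) wf vg0).
    by move=> t Ht k; apply: HF => //; apply: vg0.
  by move=> t Ht k pk x h; apply: Hd.
have vrho : valid_kstrat (mkrho F (g i)).
  move=> t Ht k; split.
    move=> a; apply: sumr_ge0 => hi _; apply: mulr_ge0.
      by case: (HF (g i) (vg i) t Ht k) => ->.
    by case: (vg i t Ht hi) => ->.
  rewrite /mkrho exchange_big /=.
  under eq_bigr => hi _ do rewrite -mulr_sumr.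
  under eq_bigr => hi _ do (case: (vg i t Ht hi) => _ ->; rewrite mulr1).
  by case: (HF (g i) (vg i) t Ht k).
exists (mkrho F (g i)); split => //; split; last exact: PE.
have vg' : valid_profile (dfwith g (kbased (mkrho F (g i)))).
  move=> l; case: (eqVneq i l) => [<-|ne]; last by rewrite dfwith_out.
  by rewrite dfwith_in => t Ht h; apply: vrho.
split => // j s vs.
rewrite PE //.
case: (eqVneq i j) => [ij|ij].
  subst j; rewrite dfwith_twice; exact: Hbne.
have vgs : valid_profile (dfwith g s).
  move=> l; case: (eqVneq j l) => [<-|ne]; last by rewrite dfwith_out.
  by rewrite dfwith_in.
rewrite dfwith_comm //.
have E : dfwith g s i = g i by rewrite dfwith_out // eq_sym.
rewrite -E PE //; exact: Hbne.
Qed.
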